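(* Let $n \ge 3$ and let $(G,c)$ be a metric TSP instance with $n$ cities. Then every 2-optimal tour $T'$ in $G$ satisfies $$c(T') \le \sqrt{\tfrac{n}{2}}\; c(T^* ),$$ where $T^*$ is a shortest tour in $G$. Moreover, this bound is tight: for every positive integer $k$, with $n = 2k^2$, there exist a metric TSP instance with $n$ cities and a 2-optimal tour $T'$ in it such that $c(T') = \sqrt{n/2}\; c(T^* )$ and $c(T^* )>0$.
   Context: A metric TSP instance with $n$ cities consists of a complete undirected graph $G$ on $n$ vertices together with a distance function $c: E(G)\to\mathbb{R}_{\ge 0}$ satisfying the triangle inequality $c(x,y)+c(y,z)\ge c(x,z)$ for all vertices $x,y,z$ (we write $c(x,y)$ for $c(\{x,y\})$, and $c(x,x)=0$). A tour is a cycle in $G$ containing all vertices; its length is $c(T)=\sum_{e\in E(T)}c(e)$, and a shortest tour is a tour of minimum length. Tours are regarded as oriented cycles (each vertex has exactly one incoming and one outgoing edge). For two edges $(a,b)$ and $(x,y)$ of an oriented tour $T$, the 2-change replaces them by $(a,x)$ and $(b,y)$ (reversing the segment from $b$ to $x$), which yields a tour again; it is improving if $c(a,x)+c(b,y) < c(a,b)+c(x,y)$. A tour is 2-optimal if it admits no improving 2-change, i.e. $c(a,x)+c(b,y)\ge c(a,b)+c(x,y)$ for all pairs of edges $(a,b),(x,y)$ of the oriented tour. *)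

(* Defs.v *)
From HB Require Import structures.
From mathcomp Require Import all_boot all_order all_algebra all_fingroup.
Set Implicit Arguments. Unset Strict Implicit. Unset Printing Implicit Defensive.
Import Order.TTheory GRing.Theory Num.Theory.
Local Open Scope ring_scope.

Definition metric_tsp (R : realFieldType) (n : nat) (c : 'I_n -> 'I_n -> R) : Prop :=
  (forall x, c x x = 0) /\
  (forall x y, c x y = c y x) /\
  (forall x y, 0 <= c x y) /\
  (forall x y z, c x z <= c x y + c y z).

(* An (oriented) tour is given by a cyclic ordering of the cities:
   t 0 -> t 1 -> ... -> t (n-1) -> t 0.  Its i-th edge is (t i, t (i+1 mod n)). *)
Definition tour_length (R : realFieldType) (n : nat) (c : 'I_n -> 'I_n -> R)
  (t : {perm 'I_n}) : R :=
  \sum_(i < n) c (t i) (t (ordS i)).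

Definition two_optimal (R : realFieldType) (n : nat) (c : 'I_n -> 'I_n -> R)
  (t : {perm 'I_n}) : Prop :=
  forall i j : 'I_n, i != j ->
    c (t i) (t (ordS i)) + c (t j) (t (ordS j))
      <= c (t i) (t j) + c (t (ordS i)) (t (ordS j)).

Definition shortest_tour (R : realFieldType) (n : nat) (c : 'I_n -> 'I_n -> R)
  (t : {perm 'I_n}) : Prop :=
  forall t' : {perm 'I_n}, tour_length c t <= tour_length c t'.

(* Main.v *)
Require Import Defs.
From HB Require Import structures.
From mathcomp Require Import all_boot all_order all_algebra all_fingroup.
From mathcomp Require Import ring lra zify.
Set Implicit Arguments. Unset Strict Implicit. Unset Printing Implicit Defensive.
Import Order.TTheory GRing.Theory Num.Theory.
Local Open Scope ring_scope.

Section Core.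

Variable R : realFieldType.
Implicit Types (x y a b r P : R).
Definition pp x := if 0 <= x then x else 0.
Definition ab x := if 0 <= x then x else - x.
Definition pdist (P a b : R) := if ab (a - b) <= P - ab (a - b) then ab (a - b) else P - ab (a - b).
Definition tent (c0 r x : R) := pp (r - ab (x - c0)).
Definition Gf (c0 r x : R) := if x <= c0 then (pp (x - (c0 - r)))^+2 / 2
   else r^+2 - (pp (c0 + r - x))^+2/2.

Definition S3 P c r x := tent c r x + tent (c - P) r x + tent (c + P) r x.

Ltac splitifs := repeat match goal with
 | |- context [if (?a <= ?b) then _ else _] =>
   lazymatch a with context [if _ then _ else _] => fail | _ =>
   lazymatch b with context [if _ then _ else _] => fail | _ =>
   case: (lerP a b) => ? end end
 end.

Lemma pp_ge0 x : 0 <= pp x. Proof. by rewrite /pp; case: (lerP 0 x). Qed.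
Lemma pp_ge x : x <= pp x. Proof. rewrite /pp; case: (lerP 0 x) => //; lra. Qed.
Lemma pp_id x : 0 <= x -> pp x = x. Proof. by rewrite /pp => ->. Qed.
Lemma pp_0 x : x <= 0 -> pp x = 0. Proof. rewrite /pp; case: (lerP 0 x) => //; lra. Qed.

Lemma ramp_up a b d : a <= b ->
  pp (b - d) ^+ 2 - pp (a - d) ^+ 2 <= (b - a) * (pp (a - d) + pp (b - d)).
Proof.
move=> ab0; case: (lerP d a) => h1.
  rewrite !pp_id; [|lra|lra]; rewrite !expr2; nra.
case: (lerP d b) => h2.
  rewrite (pp_id (x := b - d)) ?(pp_0 (x := a - d)); [|lra|lra]; rewrite !expr2; nra.
rewrite !pp_0; [|lra|lra]; rewrite !expr2; nra.
Qed.

Lemma ramp_down a b d : a <= b ->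
  pp (d - a) ^+ 2 - pp (d - b) ^+ 2 <= (b - a) * (pp (d - a) + pp (d - b)).
Proof.
move=> ab0; case: (lerP b d) => h1.
  rewrite !pp_id; [|lra|lra]; rewrite !expr2; nra.
case: (lerP a d) => h2.
  rewrite (pp_id (x := d - a)) ?(pp_0 (x := d - b)); [|lra|lra]; rewrite !expr2; nra.
rewrite !pp_0; [|lra|lra]; rewrite !expr2; nra.
Qed.

Lemma tent_le c0 r x : x <= c0 -> tent c0 r x = pp (x - (c0 - r)).
Proof. move=> h; rewrite /tent /ab; case: (lerP 0 (x - c0)) => h2; congr pp; lra. Qed.
Lemma tent_ge c0 r x : c0 <= x -> tent c0 r x = pp (c0 + r - x).
Proof. move=> h; rewrite /tent /ab; case: (lerP 0 (x - c0)) => h2; congr pp; lra. Qed.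
Lemma Gf_le c0 r x : x <= c0 -> Gf c0 r x = (pp (x - (c0 - r)))^+2 / 2.
Proof. by move=> h; rewrite /Gf h. Qed.
Lemma Gf_ge c0 r x : 0 <= r -> c0 <= x -> Gf c0 r x = r^+2 - (pp (c0 + r - x))^+2/2.
Proof.
move=> r0 h; rewrite /Gf; case: (lerP x c0) => h2 //.
have -> : x = c0 by lra.
rewrite !pp_id; [|lra|lra]. rewrite !expr2. have -> : c0 - (c0 - r) = r by lra.
have -> : c0 + r - c0 = r by lra. lra.
Qed.

Lemma step_tent (c0 r a b : R) : 0 <= r -> a <= b -> (b <= c0 \/ c0 <= a) ->
  2 * (Gf c0 r b - Gf c0 r a) <= (b - a) * (tent c0 r a + tent c0 r b).
Proof.
move=> r0 ab0 [bc|ca].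
- have ac : a <= c0 by lra.
  rewrite !Gf_le // !tent_le //. have := ramp_up (c0 - r) ab0. lra.
- have cb : c0 <= b by lra.
  rewrite !Gf_ge // !tent_ge //.
  have := ramp_down (c0 + r) ab0. lra.
Qed.

Lemma Gtotal xi r P : 0 <= xi -> xi <= P -> 0 <= r -> 2 * r <= P ->
  (Gf xi r P - Gf xi r 0) + (Gf (xi - P) r P - Gf (xi - P) r 0)
   + (Gf (xi + P) r P - Gf (xi + P) r 0) = r ^+ 2.
Proof.
move=> h0 h1 r0 rP.
rewrite (Gf_ge r0 h1) (@Gf_le xi r 0 h0) (@Gf_ge (xi - P) r P r0); last by lra.
rewrite (@Gf_ge (xi - P) r 0 r0); last by lra.
rewrite (@Gf_le (xi + P) r P); last by lra.
rewrite (@Gf_le (xi + P) r 0); last by lra.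
rewrite (@pp_0 (xi - P + r - P)); last by lra.
rewrite (@pp_0 (0 - (xi + P - r))); last by lra.
have -> : 0 - (xi - r) = r - xi by lra.
have -> : P - (xi + P - r) = r - xi by lra.
have -> : xi - P + r - 0 = xi + r - P by lra.
rewrite !expr2; lra.
Qed.


Lemma ab_id x : 0 <= x -> ab x = x. Proof. by rewrite /ab => ->. Qed.
Lemma ab_neg x : x <= 0 -> ab x = - x. Proof. rewrite /ab; case: (lerP 0 x) => // h h2; lra. Qed.
Lemma S3_le P xi r p : 0 <= xi -> xi <= P -> 0 <= p -> p <= P -> 0 <= r -> 2 * r <= P ->
  S3 P xi r p <= pp (r - pdist P p xi).
Proof.
move=> *; rewrite /S3 /tent /pdist.
case: (lerP xi p) => h.
  rewrite (@ab_id (p - xi)) ?(@ab_id (p - (xi - P))) ?(@ab_neg (p - (xi + P))); try lra.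
  rewrite (@pp_0 (r - (p - (xi - P)))); last by lra.
  rewrite /pp; splitifs; lra.
rewrite (@ab_neg (p - xi)) ?(@ab_id (p - (xi - P))) ?(@ab_neg (p - (xi + P))); try lra.
rewrite (@pp_0 (r - - (p - (xi + P)))); last by lra.
rewrite /pp; splitifs; lra.
Qed.

Lemma pdist_le_ab P a b : pdist P a b <= ab (a - b).
Proof. rewrite /pdist; case: (lerP (ab (a - b)) (P - ab (a - b))) => h //; lra. Qed.
Lemma pdist_le_P P a b : pdist P a b <= P - ab (a - b).
Proof. rewrite /pdist; case: (lerP (ab (a - b)) (P - ab (a - b))) => h //; lra. Qed.
Lemma pdist_half P a b : 2 * pdist P a b <= P.
Proof. rewrite /pdist; case: (lerP (ab (a - b)) (P - ab (a - b))) => h //; lra. Qed.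
Lemma ab_sub_sym a b : ab (a - b) = ab (b - a).
Proof. rewrite /ab; case: (lerP 0 (a - b)) => h1; case: (lerP 0 (b - a)) => h2; lra. Qed.
Lemma pdist_sym P a b : pdist P a b = pdist P b a.
Proof. by rewrite /pdist ab_sub_sym. Qed.
Lemma pdist_ge0 P a b : 0 <= a <= P -> 0 <= b <= P -> 0 <= pdist P a b.
Proof.
move=> /andP[? ?] /andP[? ?]; rewrite /pdist /ab; splitifs; lra.
Qed.
Lemma pdist_tri P a b e : 0 <= a <= P -> 0 <= b <= P -> 0 <= e <= P ->
  pdist P a b <= pdist P a e + pdist P e b.
Proof.
move=> /andP[? ?] /andP[? ?] /andP[? ?]; rewrite /pdist /ab; splitifs; lra.
Qed.


Lemma line_pack (x s : nat -> R) (m : nat) (A B : R) : A <= B ->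
  (forall j, (j < m)%N -> 0 <= s j) ->
  (forall j, (j < m)%N -> 0 < s j -> A <= x j - s j /\ x j + s j <= B) ->
  (forall j k, (j < k)%N -> (k < m)%N -> 0 < s j -> 0 < s k -> s j + s k <= x k - x j) ->
  2 * \sum_(0 <= j < m) s j <= B - A.
Proof.
elim: m B => [|m IH] B AB hs hb hp; first by rewrite big_geq //; lra.
rewrite big_nat_recr //=.
have sm0 := hs m (ltnSn m).
case: (lerP (s m) 0) => sm.
  have -> : s m = 0 by lra.
  rewrite addr0; apply: IH => //.
  - by move=> j jm; apply: hs; apply: ltnW.
  - by move=> j jm; apply: hb; apply: ltnW.
  - by move=> j k jk km; apply: hp => //; apply: ltnW.
have [hbm1 hbm2] := hb m (ltnSn m) sm.
have IH' := IH (x m - s m) hbm1.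
have : 2 * \sum_(0 <= i < m) s i <= x m - s m - A.
  apply: IH'.
  - by move=> j jm; apply: hs; apply: ltnW.
  - move=> j jm sj; have [h1 _] := hb j (ltnW jm) sj; split => //.
    have := hp j m jm (ltnSn m) sj sm; lra.
  - by move=> j k jk km; apply: hp => //; apply: ltnW.
lra.
Qed.

Section Pos.
Variable g : nat -> R.
Hypothesis hg : forall k, 0 <= g k.
Definition X k := \sum_(0 <= j < k) g j.
Lemma X0 : X 0 = 0. Proof. by rewrite /X big_geq. Qed.
Lemma XS k : X k.+1 = X k + g k. Proof. by rewrite /X big_nat_recr. Qed.
Lemma Xmono j k : (j <= k)%N -> X j <= X k.
Proof.
elim: k => [|k IH]; first by rewrite leqn0 => /eqP ->.
rewrite leq_eqVlt => /orP [/eqP -> //| ]; rewrite ltnS => /IH h.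
rewrite XS; have := hg k; lra.
Qed.
Lemma X_ge0 k : 0 <= X k. Proof. by rewrite -X0; apply: Xmono. Qed.

Lemma trap_sum (m : nat) c0 r : 0 <= r ->
  (forall k, (k < m)%N -> X k.+1 <= c0 \/ c0 <= X k) ->
  2 * (Gf c0 r (X m) - Gf c0 r 0) <=
  \sum_(0 <= k < m) g k * (tent c0 r (X k) + tent c0 r (X k.+1)).
Proof.
move=> r0 hc.
have -> : Gf c0 r 0 = Gf c0 r (X 0) by rewrite X0.
rewrite -(telescope_sumr (fun k => Gf c0 r (X k))) // mulr_sumr.
apply: ler_sum_nat => k /andP [_ km].
have -> : g k = X k.+1 - X k by rewrite XS; lra.
apply: step_tent => //; first by rewrite XS; have := hg k; lra.
exact: hc.
Qed.

Lemma trap_node (m i : nat) r : (i <= m)%N -> 0 <= r -> 2 * r <= X m ->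
  2 * r ^+ 2 <= \sum_(0 <= k < m) g k * (S3 (X m) (X i) r (X k) + S3 (X m) (X i) r (X k.+1)).
Proof.
move=> im r0 rP.
set P := X m.
have Pk : forall k, (k <= m)%N -> X k <= P by move=> k km; apply: Xmono.
have t1 := @trap_sum m (X i) r r0.
have t2 := @trap_sum m (X i - P) r r0.
have t3 := @trap_sum m (X i + P) r r0.
have := @Gtotal (X i) r P (X_ge0 i) (Pk i im) r0 rP.
have h1 : forall k, (k < m)%N -> X k.+1 <= X i \/ X i <= X k.
  move=> k km; case: (ltnP k i) => h; [left|right]; exact: Xmono.
have h2 : forall k, (k < m)%N -> X k.+1 <= X i - P \/ X i - P <= X k.
  move=> k km; right; have := X_ge0 k; have := Pk i im; lra.
have h3 : forall k, (k < m)%N -> X k.+1 <= X i + P \/ X i + P <= X k.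
  move=> k km; left; have := Pk k.+1 km; have := X_ge0 i; lra.
move: (t1 h1) (t2 h2) (t3 h3) => {t1 t2 t3 h1 h2 h3}.
rewrite /S3 -/P => t1 t2 t3 tot.
have -> : \sum_(0 <= k < m) g k * (tent (X i) r (X k) + tent (X i - P) r (X k) + tent (X i + P) r (X k) +
    (tent (X i) r (X k.+1) + tent (X i - P) r (X k.+1) + tent (X i + P) r (X k.+1)))
  = \sum_(0 <= k < m) g k * (tent (X i) r (X k) + tent (X i) r (X k.+1))
  + \sum_(0 <= k < m) g k * (tent (X i - P) r (X k) + tent (X i - P) r (X k.+1))
  + \sum_(0 <= k < m) g k * (tent (X i + P) r (X k) + tent (X i + P) r (X k.+1)).
  rewrite -!big_split /=; apply: eq_bigr => k _; lra.
lra.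
Qed.
End Pos.

End Core.

Section Circ.
Variable R : realFieldType.
Variable g : nat -> R.
Hypothesis hg : forall k, 0 <= g k.
Variable n : nat.
Local Notation X := (X g).
Local Notation P := (X n.+1).

Lemma XleP (i : 'I_n.+1) : 0 <= X i <= P.
Proof. by rewrite X_ge0 //= Xmono // ltnW. Qed.

Lemma ab_ord (i j : 'I_n.+1) : (i <= j)%N -> ab (X i - X j) = X j - X i.
Proof. move=> h; rewrite ab_neg; [lra| have := Xmono hg h; lra]. Qed.

Lemma circle_pack (s : 'I_n.+1 -> R) :
  (forall y, 0 <= s y) -> (forall y, 2 * s y <= P) ->
  (forall y y', y != y' -> 0 < s y -> 0 < s y' -> s y + s y' <= pdist P (X y) (X y')) ->
  2 * \sum_y s y <= P.
Proof.
move=> hs hh hp.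
case: (pickP (fun y => 0 < s y)) => [y0 hy0 | hnone]; last first.
  rewrite big1; first by have := X_ge0 hg n.+1; lra.
  move=> y _; have := hnone y; have := hs y; move=> /= h1 /negbT; rewrite -leNgt => h2; lra.
case: (@arg_minnP _ y0 (fun y => 0 < s y) (fun i : 'I_n.+1 => (i : nat)) hy0) => a ha amin.
case: (@arg_maxnP _ y0 (fun y => 0 < s y) (fun i : 'I_n.+1 => (i : nat)) hy0) => b hb bmax.
have ab_le : (a <= b)%N by apply: amin.
have -> : \sum_y s y = \sum_(0 <= j < n.+1) s (inord j).
  by rewrite big_mkord; apply: eq_bigr => j _; rewrite inord_val.
have key : 2 * \sum_(0 <= j < n.+1) s (inord j) <= (X b + s b) - (X a - s a).
  apply: (@line_pack R (fun j => X j) (fun j => s (inord j))).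
  - have := Xmono hg ab_le; have := hs a; have := hs b; lra.
  - by move=> j _; apply: hs.
  - move=> j jn sj; set J : 'I_n.+1 := inord j.
    have Jv : (J : nat) = j by rewrite /J inordK.
    rewrite -Jv; split.
    + have aJ := amin J sj.
      case: (eqVneq a J) => [<-|aJn]; first by lra.
      have := hp a J aJn ha sj; have := pdist_le_ab P (X a) (X J).
      rewrite ab_ord //; have := hs a; lra.
    + have Jb := bmax J sj.
      case: (eqVneq J b) => [->|Jbn]; first by lra.
      have := hp J b Jbn sj hb; have := pdist_le_ab P (X J) (X b).
      rewrite ab_ord //; have := hs b; lra.
  - move=> j k jk kn sj sk.
    have jn : (j < n.+1)%N by apply: ltn_trans jk kn.
    have Jv : ((inord j : 'I_n.+1) : nat) = j by rewrite inordK.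
    have Kv : ((inord k : 'I_n.+1) : nat) = k by rewrite inordK.
    have JK : (inord j : 'I_n.+1) != inord k.
      by apply/eqP => /(congr1 val); rewrite /= Jv Kv => E; move: jk; rewrite E ltnn.
    have := hp _ _ JK sj sk; have := pdist_le_ab P (X (inord j : 'I_n.+1)) (X (inord k : 'I_n.+1)).
    rewrite ab_ord ?Jv ?Kv ?(ltnW jk) //; lra.
case: (eqVneq a b) => [eab|nab].
  rewrite eab in key; have := hh b; lra.
have := hp a b nab ha hb; have := pdist_le_P P (X a) (X b); rewrite ab_ord //; lra.
Qed.

Lemma pp_le (x b : R) : x <= b -> 0 <= b -> pp x <= b.
Proof. rewrite /pp; case: (lerP 0 x) => //. Qed.
Lemma pp_pos (x : R) : 0 < pp x -> pp x = x.
Proof. rewrite /pp; case: (lerP 0 x) => // _; by rewrite ltxx. Qed.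

Lemma core (r : 'I_n.+1 -> R) (sg : 'I_n.+1 -> 'I_n.+1) (sgi : injective sg) :
  (forall i, 0 <= r i) -> (forall i, 2 * r i <= P) ->
  (forall i j, i != j -> r i + r j <= pdist P (X i) (X j) + pdist P (X (sg i)) (X (sg j))) ->
  2 * \sum_(i : 'I_n.+1) r i ^+ 2 <= P * P.
Proof.
move=> r0 rP h2.
have slice : forall p, 0 <= p <= P -> 2 * \sum_(i : 'I_n.+1) S3 P (X i) (r i) p <= P.
  move=> p pin; have /andP [p0 pP] := pin.
  set w := fun i : 'I_n.+1 => pp (r i - pdist P p (X i)).
  have le1 : \sum_(i : 'I_n.+1) S3 P (X i) (r i) p <= \sum_(i : 'I_n.+1) w i.
    apply: ler_sum => i _; apply: S3_le => //; try by case/andP: (XleP i).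
  have eqw : \sum_(i : 'I_n.+1) w i = \sum_(y : 'I_n.+1) w (invF sgi y).
    by rewrite [RHS](reindex_inj sgi) /=; apply: eq_bigr => i _; rewrite invF_f.
  suff : 2 * \sum_(y : 'I_n.+1) w (invF sgi y) <= P by rewrite -eqw; lra.
  apply: circle_pack.
  - by move=> y; apply: pp_ge0.
  - move=> y; set i := invF sgi y.
    have : w i <= r i.
      apply: pp_le => //; have := pdist_ge0 pin (XleP i); lra.
    have := rP i; lra.
  - move=> y y' yy wy wy'.
    set i := invF sgi y; set j := invF sgi y'.
    have ij : i != j.
      by apply: contraNneq yy => E; rewrite -(f_invF sgi y) -(f_invF sgi y') -/i -/j E.
    have := h2 i j ij.
    rewrite /i /j !f_invF -/i -/j.
    move: wy wy'; rewrite /w => /pp_pos -> /pp_pos ->.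
    have := pdist_tri (XleP i) (XleP j) pin.
    rewrite (pdist_sym P (X i) p) -/i -/j; lra.
have tr : forall i : 'I_n.+1, 2 * r i ^+ 2 <= \sum_(0 <= k < n.+1)
    g k * (S3 P (X i) (r i) (X k) + S3 P (X i) (r i) (X k.+1)).
  by move=> i; apply: trap_node => //; apply: ltnW.
have step1 : 2 * \sum_(i : 'I_n.+1) r i ^+ 2 <= \sum_(i : 'I_n.+1) \sum_(0 <= k < n.+1)
    g k * (S3 P (X i) (r i) (X k) + S3 P (X i) (r i) (X k.+1)).
  by rewrite mulr_sumr; apply: ler_sum => i _; apply: tr.
apply: (le_trans step1).
rewrite exchange_big /=.
have -> : P * P = \sum_(0 <= k < n.+1) g k * P by rewrite -mulr_suml mulrC.
apply: ler_sum_nat => k /andP [_ kn].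
rewrite -mulr_sumr big_split /=.
apply: ler_wpM2l => //.
have := slice (X k) (XleP (Ordinal kn)).
have kn' : (k.+1 <= n.+1)%N by [].
have := slice (X k.+1) (introT andP (conj (X_ge0 hg k.+1) (Xmono hg kn'))).
lra.
Qed.
End Circ.

Lemma le_pdist (R : realFieldType) (P a b z : R) : z <= ab (a - b) -> z <= P - ab (a - b) -> z <= pdist P a b.
Proof. rewrite /pdist; by case: ifP. Qed.

Lemma cauchy_schwarz (R : realFieldType) (m : nat) (r : 'I_m -> R) :
  (\sum_i r i) ^+ 2 <= m%:R * \sum_i r i ^+ 2.
Proof.
have E : \sum_i \sum_(j : 'I_m) (r i - r j) ^+ 2 = 2 * (m%:R * \sum_i r i ^+ 2 - (\sum_i r i) ^+ 2).
  have -> : \sum_i \sum_(j : 'I_m) (r i - r j) ^+ 2 =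
     \sum_i \sum_(j : 'I_m) (r i ^+ 2 + r j ^+ 2 - 2 * (r i * r j)).
    by apply: eq_bigr => i _; apply: eq_bigr => j _; rewrite !expr2; ring.
  have -> : \sum_i \sum_(j : 'I_m) (r i ^+ 2 + r j ^+ 2 - 2 * (r i * r j)) =
      \sum_i (m%:R * r i ^+ 2 + \sum_(j : 'I_m) r j ^+ 2 - 2 * (r i * \sum_(j : 'I_m) r j)).
    apply: eq_bigr => i _.
    rewrite sumrB big_split /= sumr_const card_ord -mulr_sumr -mulr_sumr.
    by rewrite -(mulr_natl (r i ^+ 2) m).
  rewrite sumrB big_split /= -mulr_sumr sumr_const card_ord -mulr_sumr -mulr_suml.
  rewrite -mulr_natl expr2; ring.
have : 0 <= \sum_i \sum_(j : 'I_m) (r i - r j) ^+ 2.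
  by apply: sumr_ge0 => i _; apply: sumr_ge0 => j _; apply: sqr_ge0.
rewrite E; lra.
Qed.

Lemma val_inord (n m : nat) : ((inord m : 'I_n.+1) : nat) = if (m < n.+1)%N then m else 0%N.
Proof. rewrite /inord /insubd; case: insubP => [u -> -> //| /negbTE -> //]. Qed.

Lemma part1 (R : rcfType) (n : nat) (c : 'I_n -> 'I_n -> R) (T' Tstar : {perm 'I_n}) :
  (0 < n)%N -> metric_tsp c -> two_optimal c T' ->
  tour_length c T' <= Num.sqrt (n%:R / 2) * tour_length c Tstar.
Proof.
case: n c T' Tstar => [//|n] c T' Tstar _ [c0 [csym [cge ctri]]] h2opt.
pose V k := Tstar (inord k).
pose g k := c (V k) (V k.+1).
have hg : forall k, 0 <= g k by move=> k; apply: cge.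
pose P := X g n.+1.
have ordSE : forall i : 'I_n.+1, ordS i = inord i.+1.
  move=> i; apply: ord_inj; rewrite /= val_inord; case: ifP => h.
    by rewrite modn_small.
  have : i.+1 = n.+1 by apply/eqP; rewrite eqn_leq ltn_ord leqNgt h.
  by move=> ->; rewrite modnn.
have LT : tour_length c Tstar = P.
  rewrite /tour_length /P /X big_mkord; apply: eq_bigr => i _.
  by rewrite /g /V ordSE inord_val.
have Vn : V n.+1 = V 0%N.
  by rewrite /V; congr (Tstar _); apply: ord_inj; rewrite !val_inord ltnn.
have path : forall a b, (a <= b)%N -> c (V a) (V b) <= X g b - X g a.
  move=> a b; elim: b => [|b IH].
    by rewrite leqn0 => /eqP ->; rewrite c0 subrr.
  rewrite leq_eqVlt => /orP [/eqP ->| ]; first by rewrite c0 subrr.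
  rewrite ltnS => /IH h; rewrite XS.
  have := ctri (V a) (V b) (V b.+1); rewrite -/(g b); lra.
have dist : forall i j : 'I_n.+1, c (Tstar i) (Tstar j) <= pdist P (X g i) (X g j).
  have key : forall i j : 'I_n.+1, (i <= j)%N -> c (Tstar i) (Tstar j) <= pdist P (X g i) (X g j).
    move=> i j ij; apply: le_pdist; rewrite ab_ord //.
      by have := path i j ij; rewrite /V !inord_val.
    have h1 := path j n.+1 (ltnW (ltn_ord j)).
    have h2 := path 0%N i (leq0n i).
    rewrite Vn X0 /V !inord_val in h1 h2 *.
    rewrite -/P in h1; rewrite csym; have := ctri (Tstar j) (Tstar (inord 0)) (Tstar i); lra.
  move=> i j; case: (leqP i j) => h; first exact: key.
  by rewrite csym pdist_sym; apply: key; apply: ltnW.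
pose hd i := T' (ordS (T'^-1%g (Tstar i))).
pose r i := c (Tstar i) (hd i).
pose sg i := (Tstar^-1)%g (hd i).
have hdE : forall i, hd i = Tstar (sg i) by move=> i; rewrite /sg permKV.
have sgi : injective sg.
  move=> i j; rewrite /sg /hd => /perm_inj /perm_inj /ordS_inj /perm_inj /perm_inj //.
have Lr : tour_length c T' = \sum_i r i.
  rewrite /tour_length (reindex_inj (h := fun i => T'^-1%g (Tstar i))); last first.
    by move=> i j /perm_inj /perm_inj.
  by apply: eq_bigr => i _; rewrite /r /hd permKV.
have r0 : forall i, 0 <= r i by move=> i; apply: cge.
have rd : forall i, r i <= pdist P (X g i) (X g (sg i)).
  by move=> i; rewrite /r hdE; apply: dist.
have rP : forall i, 2 * r i <= P.
  by move=> i; have := rd i; have := pdist_half P (X g i) (X g (sg i)); lra.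
have r2 : forall i j, i != j ->
    r i + r j <= pdist P (X g i) (X g j) + pdist P (X g (sg i)) (X g (sg j)).
  move=> i j ij.
  have ab : T'^-1%g (Tstar i) != T'^-1%g (Tstar j).
    by apply: contraNneq ij => /perm_inj /perm_inj ->.
  have := h2opt _ _ ab; rewrite !permKV -/(hd i) -/(hd j) -/(r i) -/(r j).
  have := dist i j; have := dist (sg i) (sg j); rewrite -!hdE; lra.
have C := core hg sgi r0 rP r2.
have CS := cauchy_schwarz r.
rewrite Lr LT.
have P0 : 0 <= P by apply: X_ge0.
have Lge : 0 <= \sum_i r i by apply: sumr_ge0.
have H : (\sum_i r i) ^+ 2 <= n.+1%:R / 2 * P ^+ 2.
  apply: (le_trans CS).
  have hn : 0 <= n.+1%:R :> R by apply: ler0n.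
  rewrite expr2 -[_ / 2 * _]mulrA; apply: ler_wpM2l => //; move: C; rewrite -/P; lra.
rewrite -(ger0_norm Lge) -sqrtr_sqr.
rewrite -(ger0_norm P0) -sqrtr_sqr -sqrtrM; last by apply: divr_ge0; [apply: ler0n|lra].
exact: ler_wsqrtr.
Qed.

Section Ex.
Variable k : nat.
Hypothesis hk : (0 < k)%N.
Local Notation n := (2 * k ^ 2)%N.

Definition ee (s : nat) := (s %% 2)%N.
Definition th (s : nat) := (s %/ 2)%N.
Definition uu s := (th s %/ k)%N.
Definition vv s := (th s %% k)%N.
Definition idx s := if ee s == 1%N then ((uu s + vv s) %% k)%N else vv s.
Definition code (s : nat) := (2 * idx s + ee s)%N.
Definition Tp (s : nat) := (k * code s + uu s)%N.

Lemma modk_cancel a b x : (a < k)%N -> (b < k)%N -> ((a + x) %% k = (b + x) %% k)%N -> a = b.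
Proof. by move=> ha hb /eqP; rewrite eqn_modDr !modn_small // => /eqP. Qed.

Lemma ee_lt s : (ee s < 2)%N. Proof. by rewrite /ee ltn_mod. Qed.
Lemma s_dec s : s = (2 * th s + ee s)%N.
Proof. rewrite /th /ee; lia. Qed.
Lemma t_dec s : th s = (uu s * k + vv s)%N.
Proof. exact: divn_eq. Qed.
Lemma vv_lt s : (vv s < k)%N. Proof. exact: ltn_pmod. Qed.
Lemma tt_lt s : (s < n)%N -> (th s < k * k)%N.
Proof. rewrite /th => h; nia. Qed.
Lemma uu_lt s : (s < n)%N -> (uu s < k)%N.
Proof. by move=> h; rewrite /uu ltn_divLR // tt_lt. Qed.
Lemma idx_lt s : (idx s < k)%N.
Proof. by rewrite /idx; case: ifP => _; [rewrite ltn_pmod | exact: vv_lt]. Qed.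
Lemma code_lt s : (code s < 2 * k)%N.
Proof. have := idx_lt s; have := ee_lt s; rewrite /code; lia. Qed.
Lemma Tp_lt s : (s < n)%N -> (Tp s < n)%N.
Proof. move=> h; have := uu_lt h; have := code_lt s; rewrite /Tp => *; nia. Qed.
Lemma Tp_div s : (s < n)%N -> (Tp s %/ k = code s)%N.
Proof. by move=> h; rewrite /Tp mulnC divnMDl // divn_small ?addn0 // uu_lt. Qed.
Lemma Tp_mod s : (s < n)%N -> (Tp s %% k = uu s)%N.
Proof. by move=> h; rewrite /Tp mulnC modnMDl modn_small // uu_lt. Qed.
Lemma code_ee s : (code s %% 2 = ee s)%N.
Proof. have := ee_lt s; rewrite /code; lia. Qed.
Lemma code_idx s : (code s %/ 2 = idx s)%N.
Proof. have := ee_lt s; rewrite /code; lia. Qed.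

Lemma decode s s' : ee s = ee s' -> uu s = uu s' -> vv s = vv s' -> s = s'.
Proof. by move=> h1 h2 h3; rewrite (s_dec s) (s_dec s') (t_dec s) (t_dec s') h1 h2 h3. Qed.

Lemma code_inj s s' : (s < n)%N -> (s' < n)%N -> code s = code s' -> uu s = uu s' -> s = s'.
Proof.
move=> hs hs' hc hu.
have he : ee s = ee s' by rewrite -code_ee hc code_ee.
have hi : idx s = idx s' by rewrite -code_idx hc code_idx.
apply: decode => //.
move: hi; rewrite /idx -he; case: ifP => _ //.
by rewrite hu addnC [(uu s' + _)%N]addnC => /modk_cancel; apply; apply: vv_lt.
Qed.

Lemma ee1 s : ee s = 1%N -> (s < n)%N -> (s.+1 < n)%N \/ s.+1 = n.
Proof. move=> _ h; lia. Qed.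

Lemma n_even : (n %% 2 = 0)%N.
Proof. by rewrite modnMr. Qed.

Lemma next_even (s : 'I_n) : ee s = 0%N -> (ordS s : nat) = s.+1.
Proof.
move=> he /=; apply: modn_small.
have := ltn_ord s; move: he; rewrite /ee; move: (s : nat) => m; lia.
Qed.

Lemma ee_next_even (s : 'I_n) : ee s = 0%N -> ee (ordS s) = 1%N /\ uu (ordS s) = uu s /\ vv (ordS s) = vv s.
Proof.
move=> he; rewrite next_even //.
have ht : th s.+1 = th s by move: he; rewrite /th /ee; lia.
by rewrite /uu /vv ht; split => //; move: he; rewrite /ee; lia.
Qed.

Lemma code_next_odd (s : 'I_n) : ee s = 1%N -> ee (ordS s) = 0%N /\ code (ordS s) = (2 * ((th s).+1 %% k))%N.
Proof.
move=> he /=.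
have := ltn_ord s; move=> hs.
case: (ltnP s.+1 n) => h.
  rewrite modn_small //.
  have ht : th s.+1 = (th s).+1 by move: he; rewrite /th /ee; lia.
  have he' : ee s.+1 = 0%N by move: he; rewrite /ee; lia.
  by rewrite /code /idx he' /= /vv ht addn0.
have E : s.+1 = n by lia.
rewrite E modnn; split; first by [].
have -> : code 0 = 0%N by rewrite /code /idx /ee /vv /th /= div0n !mod0n.
have -> : (th s).+1 = (k * k)%N by move: he E; rewrite /th /ee; lia.
by rewrite modnMl.
Qed.

Lemma pair_inj (s s' : 'I_n) : ee s = ee s' -> code s = code s' -> code (ordS s) = code (ordS s') -> s = s'.
Proof.
move=> he hc hn; apply: ord_inj.
have hi : idx s = idx s' by rewrite -code_idx hc code_idx.
have := ee_lt s; case E: (ee s) => [|[|//]] _.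
- have E' : ee s' = 0%N by rewrite -he E.
  have [e1 [u1 v1]] := ee_next_even E.
  have [e2 [u2 v2]] := ee_next_even E'.
  have hv : vv s = vv s' by move: hi; rewrite /idx E E'.
  have hi2 : idx (ordS s) = idx (ordS s') by rewrite -code_idx hn code_idx.
  move: hi2; rewrite /idx e1 e2 /= u1 u2 v1 v2 hv => /modk_cancel h.
  apply: decode => //; try exact: hv; apply: h; apply: uu_lt; apply: ltn_ord.
- have E' : ee s' = 1%N by rewrite -he E.
  have [_ c1] := code_next_odd E.
  have [_ c2] := code_next_odd E'.
  move: hn; rewrite c1 c2 => /eqP; rewrite eqn_pmul2l // => /eqP.
  move=> h.
  have hv : vv s = vv s'.
    apply: (@modk_cancel (vv s) (vv s') 1%N (vv_lt s) (vv_lt s')).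
    by rewrite /vv !modnDml !addn1.
  move: hi; rewrite /idx E E' /= hv => hi.
  have hu : uu s = uu s'.
    exact: (@modk_cancel (uu s) (uu s') (vv s') (uu_lt (ltn_ord s)) (uu_lt (ltn_ord s'))).
  by apply: decode; rewrite ?E ?E'.
Qed.

Section Real.
Variable R : realFieldType.
Local Open Scope ring_scope.

Definition cc (a b : nat) : R := if a == b then 0 else if odd a == odd b then 2 else 1.
Definition cf (x y : 'I_n) : R := cc (x %/ k) (y %/ k).

Lemma cc_ge0 a b : 0 <= cc a b.
Proof. rewrite /cc; case: ifP => _ //; case: ifP => _ //. Qed.
Lemma cc_ge1 a b : a != b -> 1 <= cc a b.
Proof. by rewrite /cc => /negbTE ->; case: ifP => _ //; rewrite ler1n. Qed.
Lemma cc_le2 a b : cc a b <= 2.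
Proof. rewrite /cc; case: ifP => _; [lra|]; case: ifP => _; lra. Qed.
Lemma cc_diff a b : odd a != odd b -> cc a b = 1.
Proof.
move=> h; rewrite /cc (negbTE h); case: ifP => // /eqP E; by move: h; rewrite E eqxx.
Qed.
Lemma cc_same a b : odd a = odd b -> cc a b = if a == b then 0 else 2.
Proof. by move=> h; rewrite /cc h eqxx. Qed.

Lemma cf_metric : metric_tsp cf.
Proof.
split; first by move=> x; rewrite /cf /cc eqxx.
split; first by move=> x y; rewrite /cf /cc eq_sym [odd _ == _]eq_sym.
split; first by move=> x y; apply: cc_ge0.
move=> x y z; rewrite /cf; set a := (x %/ k)%N; set b := (y %/ k)%N; set c := (z %/ k)%N.
case: (eqVneq a c) => [->|ac]; first by rewrite /cc eqxx; apply: addr_ge0; apply: cc_ge0.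
case: (eqVneq a b) => [->|ab]; first by rewrite {2}/cc eqxx add0r.
case: (eqVneq b c) => [->|bc]; first by rewrite {3}/cc eqxx addr0.
have := cc_ge1 ab; have := cc_ge1 bc; have := cc_le2 a c; lra.
Qed.

Definition Tf (s : 'I_n) : 'I_n := Ordinal (Tp_lt (ltn_ord s)).
Lemma Tinj : injective Tf.
Proof.
move=> s s' /(congr1 val) /= E.
apply: ord_inj; apply: code_inj => //.
  by rewrite -(Tp_div (ltn_ord s)) E Tp_div.
by rewrite -(Tp_mod (ltn_ord s)) E Tp_mod.
Qed.
Definition Tpm : {perm 'I_n} := perm Tinj.
Lemma Tpm_div s : ((Tpm s : nat) %/ k)%N = code s.
Proof. by rewrite permE /= Tp_div. Qed.

Lemma odd_code s : odd (code s) = (ee s == 1%N).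
Proof.
rewrite /code oddD oddM /=.
have := ee_lt s; case: (ee s) => [|[|//]] _ //.
Qed.

Lemma ee01 (s : nat) : ee s = 0%N \/ ee s = 1%N.
Proof. have := ee_lt s; case: (ee s) => [|[|//]] _; by [left|right]. Qed.

Lemma odd_next (s : 'I_n) : odd (code (ordS s)) = ~~ odd (code s).
Proof.
rewrite !odd_code; case: (ee01 s) => E.
  by have [-> _] := ee_next_even E; rewrite E.
by have [-> _] := code_next_odd E; rewrite E.
Qed.

Lemma two_opt_ex : two_optimal cf Tpm.
Proof.
move=> i j ij; rewrite /cf !Tpm_div.
rewrite (@cc_diff (code i)) ?odd_next; last by case: (odd (code i)).
rewrite (@cc_diff (code j)) ?odd_next; last by case: (odd (code j)).
case: (boolP (odd (code i) == odd (code j))) => h.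
  rewrite (cc_same (eqP h)).
  have h' : odd (code (ordS i)) = odd (code (ordS j)) by rewrite !odd_next (eqP h).
  rewrite (cc_same h').
  case: (eqVneq (code i) (code j)) => e1; case: (eqVneq (code (ordS i)) (code (ordS j))) => e2; try lra.
  have hee : ee i = ee j.
    move: h; rewrite !odd_code; case: (ee01 i) => ->; case: (ee01 j) => -> //.
  by move: ij; rewrite (pair_inj hee e1 e2) eqxx.
rewrite cc_diff // cc_diff; first lra.
by rewrite !odd_next; move: h; case: (odd (code i)); case: (odd (code j)).
Qed.


Lemma LTpm : tour_length cf Tpm = n%:R.
Proof.
rewrite /tour_length /cf.
have -> : \sum_(i < n) cc (Tpm i %/ k) (Tpm (ordS i) %/ k) = \sum_(i < n) (1 : R).
  apply: eq_bigr => s _; rewrite !Tpm_div cc_diff // odd_next; by case: (odd (code s)).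
by rewrite sumr_const card_ord.
Qed.

Lemma count_mult (m : nat) : (\sum_(p < m) (k %| p.+1) = m %/ k)%N.
Proof.
elim: m => [|m IH]; first by rewrite big_ord0 div0n.
by rewrite big_ord_recr /= IH divnS // addnC.
Qed.

Lemma n_div : (n %/ k = 2 * k)%N.
Proof. by rewrite expnS mulnA mulnK. Qed.

Lemma term1 (p : 'I_n) : cc (p %/ k) (ordS p %/ k) = ((k %| p.+1)%N : nat)%:R.
Proof.
rewrite /=.
case: (ltnP p.+1 n) => h.
  rewrite modn_small // divnS //.
  case: (boolP (k %| p.+1)%N) => d /=.
    rewrite cc_diff // add1n /=; by case: (odd _).
  by rewrite add0n /cc eqxx.
have E : p.+1 = n by have := ltn_ord p; lia.
have dv : (k %| p.+1)%N by rewrite E dvdn_mull // dvdn_exp.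
rewrite dv E modnn div0n.
have hp : (p %/ k = 2 * k - 1)%N.
  have := divnS p hk; rewrite dv E n_div /=; lia.
rewrite hp cc_diff //=.
have -> : (2 * k - 1 = (k - 1).*2.+1)%N by rewrite -mul2n; lia.
by rewrite /= odd_double.
Qed.

Lemma LTstar : tour_length cf 1%g = (2 * k)%:R.
Proof.
rewrite /tour_length /cf.
under eq_bigr => p _ do rewrite !perm1 term1.
rewrite -natr_sum; congr (_%:R).
by rewrite count_mult n_div.
Qed.

Lemma val_iter N (b : 'I_N) j : (iter j (@ordS N) b : nat) = ((b + j) %% N)%N.
Proof.
elim: j => [|j IH] /=; first by rewrite addn0 modn_small.
by rewrite IH addnS -addn1 modnDml addn1.
Qed.

Lemma cyc_trans N (f : 'I_N -> bool) a b : f a -> ~~ f b -> exists i, ~~ f i && f (ordS i).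
Proof.
move=> fa fb.
case: (pickP (fun i => ~~ f i && f (ordS i))) => [i hi | none]; first by exists i.
have step : forall i, ~~ f i -> ~~ f (ordS i).
  by move=> i fi; have := none i; rewrite /= fi /= => ->.
have it : forall j, ~~ f (iter j (@ordS N) b).
  by elim=> [|j IH] //=; apply: step.
have : iter (a + (N - b)) (@ordS N) b = a.
  apply: ord_inj; rewrite val_iter.
  have hb := ltn_ord b; have ha := ltn_ord a.
  have -> : (b + (a + (N - b)) = a + N)%N by lia.
  by rewrite modnDr modn_small.
by move=> E; move: (it (a + (N - b))%N); rewrite E fa.
Qed.

Lemma exists_trans (t : {perm 'I_n}) (m : 'I_(2 * k)) :
  exists i : 'I_n, ((t i %/ k)%N != m) && ((t (ordS i) %/ k)%N == m).
Proof.
have hm := ltn_ord m.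
have w1lt : (k * m < n)%N by nia.
pose w1 : 'I_n := Ordinal w1lt.
have w2lt : ((if m == 0 :> nat then k else 0) < n)%N by case: ifP => _; nia.
pose w2 : 'I_n := Ordinal w2lt.
apply: (@cyc_trans _ (fun i => (t i %/ k)%N == m) (t^-1%g w1) (t^-1%g w2)).
  by rewrite permKV /= mulKn.
rewrite permKV /=; case: ifP => h.
  by rewrite divnn hk (eqP h).
by rewrite div0n eq_sym h.
Qed.

Lemma lower (t : {perm 'I_n}) : (2 * k)%:R <= tour_length cf t.
Proof.
rewrite /tour_length /cf.
have step1 : forall i : 'I_n,
  \sum_(m < 2 * k) (((t i %/ k)%N != m) && ((t (ordS i) %/ k)%N == m))%:R
    <= cc (t i %/ k) (t (ordS i) %/ k).
  move=> i; set x := (t i %/ k)%N; set y := (t (ordS i) %/ k)%N.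
  case: (eqVneq x y) => [E|ne].
    rewrite big1 ?cc_ge0 // => m _; rewrite E.
    by case: (eqVneq y m) => //=; rewrite andbF.
  have ylt : (y < 2 * k)%N by rewrite /y ltn_divLR //; have := ltn_ord (t (ordS i)); nia.
  have := cc_ge1 ne.
  rewrite (bigD1 (Ordinal ylt)) //= eqxx andbT big1; last first.
    move=> m /negbTE hm; rewrite [y == m]eq_sym.
    have -> : (m == y :> nat) = false.
      by apply/negbTE; move: hm; apply: contraFN => /eqP E; apply/eqP; apply: ord_inj.
    by rewrite andbF.
  rewrite addr0; case: (_ != _) => /=; lra.
apply: (@le_trans _ _ (\sum_(i : 'I_n) \sum_(m < 2 * k)
    (((t i %/ k)%N != m) && ((t (ordS i) %/ k)%N == m))%:R)); last first.
  by apply: ler_sum => i _; apply: step1.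
rewrite exchange_big /=.
have -> : (2 * k)%:R = \sum_(m < 2 * k) (1 : R) by rewrite sumr_const card_ord.
apply: ler_sum => m _.
have [i hi] := exists_trans t m.
rewrite (bigD1 i) //= hi.
have : 0 <= \sum_(j < n | j != i) (((t j %/ k)%N != m) && ((t (ordS j) %/ k)%N == m))%:R :> R.
  by apply: sumr_ge0 => j _; apply: ler0n.
have -> : (true%:R : R) = 1 by []. lra.
Qed.

End Real.
End Ex.

Theorem theorem1 (R : rcfType) :
  (forall (n : nat) (c : 'I_n -> 'I_n -> R) (T' Tstar : {perm 'I_n}),
      (3 <= n)%N -> metric_tsp c -> two_optimal c T' -> shortest_tour c Tstar ->
      tour_length c T' <= Num.sqrt (n%:R / 2) * tour_length c Tstar)
  /\
  (forall k : nat, (0 < k)%N ->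
     exists (c : 'I_(2 * k ^ 2) -> 'I_(2 * k ^ 2) -> R) (T' Tstar : {perm 'I_(2 * k ^ 2)}),
       [/\ metric_tsp c, two_optimal c T', shortest_tour c Tstar,
           tour_length c T' = Num.sqrt ((2 * k ^ 2)%N%:R / 2) * tour_length c Tstar
         & 0 < tour_length c Tstar]).
Proof.
split.
  move=> n c T' Tstar hn hm h2 _; apply: part1 => //; lia.
move=> k hk.
exists (@cf k R), (Tpm hk), 1%g.
split.
- exact: cf_metric.
- exact: two_opt_ex.
- by move=> t; rewrite (LTstar hk R); exact: (lower hk R t).
- rewrite (LTpm hk R) (LTstar hk R).
  have -> : (2 * k ^ 2)%N%:R / 2 = (k%:R : R) ^+ 2.
    by rewrite natrM natrX mulrAC mulfV ?mul1r // pnatr_eq0.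
  rewrite sqrtr_sqr normr_nat -natrM; congr (_%:R); lia.
- by rewrite (LTstar hk R) ltr0n muln_gt0 hk.
Qed.
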